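(* Let $M^5\subset\mathbb{C}^3$ be a hypersurface of class $\mathcal{C}^\kappa$ ($\kappa\ge3$), $\mathcal{C}^\infty$ or $\mathcal{C}^\omega$, given in holomorphic coordinates $(z_1,z_2,w)$, $z_k=x_k+\sqrt{-1}y_k$, $w=u+\sqrt{-1}v$, by $v=\varphi(x_1,x_2,y_1,y_2,u)$ with $\varphi$ real-valued. Set $$A_i:=-\frac{\varphi_{z_i}}{\sqrt{-1}+\varphi_u},\qquad \mathcal{L}_i:=\frac{\partial}{\partial z_i}+A_i\frac{\partial}{\partial u},\qquad \overline{\mathcal{L}}_i:=\frac{\partial}{\partial\bar z_i}+\overline{A_i}\frac{\partial}{\partial u}\qquad(i=1,2),$$ and assume that $\mathcal{L}_1(\overline{A_1})$, $\overline{\mathcal{L}}_1(A_1)$ and $\mathcal{L}_1(\overline{A_1})-\overline{\mathcal{L}}_1(A_1)$ are nowhere zero on the domain considered. Then $$-\frac{\mathcal{L}_2(\overline{A_1})-\overline{\mathcal{L}}_1(A_2)}{\mathcal{L}_1(\overline{A_1})-\overline{\mathcal{L}}_1(A_1)}=-\frac{\mathcal{L}_2(\overline{A_1})}{\mathcal{L}_1(\overline{A_1})}=-\frac{\overline{\mathcal{L}}_1(A_2)}{\overline{\mathcal{L}}_1(A_1)}.$$ (When the Levi form of $M$ has rank $1$ everywhere, this common value $k$ is the function for which $\mathcal{K}=k\mathcal{L}_1+\mathcal{L}_2$ generates the Levi kernel.)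
   Context: Notation: $\varphi_{z_i}=\tfrac12(\partial_{x_i}-\sqrt{-1}\partial_{y_i})\varphi$, $\varphi_{\bar z_i}=\overline{\varphi_{z_i}}$, $\varphi_u=\partial\varphi/\partial u$. The fields $\mathcal{L}_1,\mathcal{L}_2$ are written intrinsically on $M$ in the coordinates $(x_1,x_2,y_1,y_2,u)$ and form a frame of $T^{1,0}M$. *)

(* Defs.v *)
From Stdlib Require Import Reals ClassicalEpsilon.
Open Scope R_scope.

Record pt := mkpt { px1 : R; px2 : R; py1 : R; py2 : R; pu : R }.

Inductive Var := X1 | X2 | Y1 | Y2 | U.

Definition getc (p : pt) (k : Var) : R :=
  match k with X1 => px1 p | X2 => px2 p | Y1 => py1 p | Y2 => py2 p | U => pu p end.

Definition setc (p : pt) (k : Var) (t : R) : pt :=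
  match k with
  | X1 => mkpt t (px2 p) (py1 p) (py2 p) (pu p)
  | X2 => mkpt (px1 p) t (py1 p) (py2 p) (pu p)
  | Y1 => mkpt (px1 p) (px2 p) t (py2 p) (pu p)
  | Y2 => mkpt (px1 p) (px2 p) (py1 p) t (pu p)
  | U  => mkpt (px1 p) (px2 p) (py1 p) (py2 p) t
  end.

Definition close (q p : pt) (d : R) : Prop :=
  forall k, Rabs (getc q k - getc p k) < d.

Definition open5 (D : pt -> Prop) : Prop :=
  forall p, D p -> exists eps, 0 < eps /\ forall q, close q p eps -> D q.

Definition cont_on (D : pt -> Prop) (f : pt -> R) : Prop :=
  forall p, D p -> forall eps, 0 < eps -> exists delta, 0 < delta /\
    forall q, D q -> close q p delta -> Rabs (f q - f p) < eps.

(** Partial derivative along coordinate k (the value of the limit when it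
    exists; an arbitrary real otherwise). *)
Definition has_pd (k : Var) (f : pt -> R) (p : pt) (l : R) : Prop :=
  derivable_pt_lim (fun t => f (setc p k t)) (getc p k) l.

Definition pd (k : Var) (f : pt -> R) (p : pt) : R :=
  epsilon (inhabits 0) (fun l => has_pd k f p l).

Fixpoint Ck (n : nat) (D : pt -> Prop) (f : pt -> R) : Prop :=
  cont_on D f /\
  match n with
  | O => True
  | S m => forall k, (forall p, D p -> exists l, has_pd k f p l) /\ Ck m D (pd k f)
  end.

(** Complex numbers as pairs (real part, imaginary part). *)
Definition C := (R * R)%type.
Definition C0 : C := (0, 0).
Definition Ci : C := (0, 1).
Definition RtoC (a : R) : C := (a, 0).
Definition Cadd (z w : C) : C := (fst z + fst w, snd z + snd w).
Definition Copp (z : C) : C := (- fst z, - snd z).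
Definition Csub (z w : C) : C := Cadd z (Copp w).
Definition Cmul (z w : C) : C :=
  (fst z * fst w - snd z * snd w, fst z * snd w + snd z * fst w).
Definition Cinv (z : C) : C :=
  let n := fst z * fst z + snd z * snd z in (fst z / n, - snd z / n).
Definition Cdiv (z w : C) : C := Cmul z (Cinv w).
Definition Cconj (z : C) : C := (fst z, - snd z).

Definition CFun := pt -> C.

Inductive Idx := I1 | I2.
Definition xv (i : Idx) : Var := match i with I1 => X1 | I2 => X2 end.
Definition yv (i : Idx) : Var := match i with I1 => Y1 | I2 => Y2 end.

Definition Cpd (k : Var) (g : CFun) : CFun :=
  fun p => (pd k (fun q => fst (g q)) p, pd k (fun q => snd (g q)) p).

Definition Dz (i : Idx) (g : CFun) : CFun :=
  fun p => Cmul (RtoC (/2)) (Csub (Cpd (xv i) g p) (Cmul Ci (Cpd (yv i) g p))).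
Definition Dzb (i : Idx) (g : CFun) : CFun :=
  fun p => Cmul (RtoC (/2)) (Cadd (Cpd (xv i) g p) (Cmul Ci (Cpd (yv i) g p))).
Definition Du (g : CFun) : CFun := Cpd U g.

Definition toCF (f : pt -> R) : CFun := fun p => RtoC (f p).

Definition Acoef (phi : pt -> R) (i : Idx) : CFun :=
  fun p => Cdiv (Copp (Dz i (toCF phi) p)) (Cadd Ci (RtoC (pd U phi p))).
Definition Abar (phi : pt -> R) (i : Idx) : CFun :=
  fun p => Cconj (Acoef phi i p).

Definition Lf (phi : pt -> R) (i : Idx) (g : CFun) : CFun :=
  fun p => Cadd (Dz i g p) (Cmul (Acoef phi i p) (Du g p)).
Definition Lbf (phi : pt -> R) (i : Idx) (g : CFun) : CFun :=
  fun p => Cadd (Dzb i g p) (Cmul (Abar phi i p) (Du g p)).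

(* Main.v *)
Require Import Defs.
From Stdlib Require Import Reals Lra Lia ClassicalEpsilon FunctionalExtensionality.
From Coquelicot Require Derive Derive_2d Hierarchy.
Open Scope R_scope.

Lemma setc_getc p k : setc p k (getc p k) = p.
Proof. destruct p, k; reflexivity. Qed.

Lemma pd_eq k f p l : has_pd k f p l -> pd k f p = l.
Proof.
  intro H. unfold pd.
  pose proof (epsilon_spec (inhabits 0) (fun l => has_pd k f p l) (ex_intro _ l H)) as H'.
  exact (uniqueness_limite _ _ _ _ H' H).
Qed.

Lemma has_pd_spec k f p : (exists l, has_pd k f p l) -> has_pd k f p (pd k f p).
Proof. intros [l H]. rewrite (pd_eq _ _ _ _ H). exact H. Qed.

Lemma has_pd_const k c p : has_pd k (fun _ => c) p 0.
Proof. exact (derivable_pt_lim_const c (getc p k)). Qed.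

Lemma has_pd_eq k f p l l' : has_pd k f p l -> l = l' -> has_pd k f p l'.
Proof. intros H <-; exact H. Qed.

Lemma has_pd_ext k f g p l : (forall q, f q = g q) -> has_pd k f p l -> has_pd k g p l.
Proof.
  intros E H. replace g with f; auto. apply functional_extensionality; auto.
Qed.

Lemma has_pd_plus k f g p a b : has_pd k f p a -> has_pd k g p b ->
  has_pd k (fun q => f q + g q) p (a + b).
Proof. unfold has_pd; intros H1 H2. exact (derivable_pt_lim_plus _ _ _ _ _ H1 H2). Qed.

Lemma has_pd_minus k f g p a b : has_pd k f p a -> has_pd k g p b ->
  has_pd k (fun q => f q - g q) p (a - b).
Proof. unfold has_pd; intros H1 H2. exact (derivable_pt_lim_minus _ _ _ _ _ H1 H2). Qed.

Lemma has_pd_opp k f p a : has_pd k f p a -> has_pd k (fun q => - f q) p (- a).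
Proof. unfold has_pd; intros H1. exact (derivable_pt_lim_opp _ _ _ H1). Qed.

Lemma has_pd_mult k f g p a b : has_pd k f p a -> has_pd k g p b ->
  has_pd k (fun q => f q * g q) p (a * g p + f p * b).
Proof.
  unfold has_pd; intros H1 H2.
  pose proof (derivable_pt_lim_mult _ _ _ _ _ H1 H2) as H. cbv beta in H.
  rewrite setc_getc in H. exact H.
Qed.

Lemma has_pd_div k f g p a b : has_pd k f p a -> has_pd k g p b -> g p <> 0 ->
  has_pd k (fun q => f q / g q) p ((a * g p - b * f p) / (g p)²).
Proof.
  unfold has_pd; intros H1 H2 Hg.
  assert (Hg' : (fun t => g (setc p k t)) (getc p k) <> 0) by (cbv beta; rewrite setc_getc; auto).
  pose proof (derivable_pt_lim_div _ _ _ _ _ H1 H2 Hg') as H. cbv beta in H.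
  rewrite setc_getc in H. exact H.
Qed.

Definition hasC k (g : CFun) p (l : Defs.C) :=
  has_pd k (fun q => fst (g q)) p (fst l) /\ has_pd k (fun q => snd (g q)) p (snd l).

Lemma Cpd_eq k g p l : hasC k g p l -> Cpd k g p = l.
Proof.
  intros [H1 H2]. unfold Cpd. rewrite (pd_eq _ _ _ _ H1), (pd_eq _ _ _ _ H2).
  destruct l; reflexivity.
Qed.

Lemma hasC_eq k g p l l' : hasC k g p l -> l = l' -> hasC k g p l'.
Proof. intros H <-; exact H. Qed.

Lemma hasC_ext k f g p l : (forall q, f q = g q) -> hasC k f p l -> hasC k g p l.
Proof.
  intros E H. replace g with f; auto. apply functional_extensionality; auto.
Qed.

Lemma hasC_const k (c : Defs.C) p : hasC k (fun _ => c) p C0.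
Proof. split; apply has_pd_const. Qed.

Lemma hasC_RtoC k f p a : has_pd k f p a -> hasC k (fun q => RtoC (f q)) p (RtoC a).
Proof. intros H; split; [exact H | exact (has_pd_const k 0 p)]. Qed.

Lemma hasC_add k f g p a b : hasC k f p a -> hasC k g p b ->
  hasC k (fun q => Cadd (f q) (g q)) p (Cadd a b).
Proof. intros [H1 H2] [H3 H4]; split; [exact (has_pd_plus _ _ _ _ _ _ H1 H3) | exact (has_pd_plus _ _ _ _ _ _ H2 H4)]. Qed.

Lemma hasC_opp k f p a : hasC k f p a -> hasC k (fun q => Copp (f q)) p (Copp a).
Proof. intros [H1 H2]; split; [exact (has_pd_opp _ _ _ _ H1) | exact (has_pd_opp _ _ _ _ H2)]. Qed.

Lemma hasC_sub k f g p a b : hasC k f p a -> hasC k g p b ->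
  hasC k (fun q => Csub (f q) (g q)) p (Csub a b).
Proof. intros H1 H2. unfold Csub. apply hasC_add; auto. apply hasC_opp; auto. Qed.

Lemma hasC_conj k f p a : hasC k f p a -> hasC k (fun q => Cconj (f q)) p (Cconj a).
Proof. intros [H1 H2]; split; [exact H1 | exact (has_pd_opp _ _ _ _ H2)]. Qed.

Lemma hasC_mul k f g p a b : hasC k f p a -> hasC k g p b ->
  hasC k (fun q => Cmul (f q) (g q)) p (Cadd (Cmul a (g p)) (Cmul (f p) b)).
Proof.
  intros [H1 H2] [H3 H4]; split.
  - change (has_pd k (fun q => fst (f q) * fst (g q) - snd (f q) * snd (g q)) p
              (fst (Cadd (Cmul a (g p)) (Cmul (f p) b)))).
    eapply has_pd_eq.
    + apply has_pd_minus; apply has_pd_mult; eassumption.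
    + unfold Cadd, Cmul; simpl; ring.
  - change (has_pd k (fun q => fst (f q) * snd (g q) + snd (f q) * fst (g q)) p
              (snd (Cadd (Cmul a (g p)) (Cmul (f p) b)))).
    eapply has_pd_eq.
    + apply has_pd_plus; apply has_pd_mult; eassumption.
    + unfold Cadd, Cmul; simpl; ring.
Qed.

Lemma Cnz (z : Defs.C) : z <> C0 -> fst z * fst z + snd z * snd z <> 0.
Proof.
  destruct z as [x y]; simpl; intros H E; apply H.
  assert (x = 0) by nra; assert (y = 0) by nra; subst; reflexivity.
Qed.

Lemma hasC_inv k f p a : hasC k f p a -> f p <> C0 ->
  hasC k (fun q => Cinv (f q)) p (Copp (Cmul a (Cinv (Cmul (f p) (f p))))).
Proof.
  intros [H1 H2] Hf. pose proof (Cnz _ Hf) as N.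
  assert (M : forall x y : R, x*x+y*y <> 0 -> (x*x - y*y)*(x*x-y*y) + (x*y+y*x)*(x*y+y*x) <> 0).
  { intros x y Hxy. replace ((x*x - y*y)*(x*x-y*y) + (x*y+y*x)*(x*y+y*x)) with ((x*x+y*y)*(x*x+y*y)) by ring.
    apply Rmult_integral_contrapositive; auto. }
  split.
  - change (has_pd k (fun q => fst (f q) / (fst (f q) * fst (f q) + snd (f q) * snd (f q))) p
       (fst (Copp (Cmul a (Cinv (Cmul (f p) (f p))))))).
    eapply has_pd_eq.
    + apply has_pd_div; [exact H1 | apply has_pd_plus; [exact (has_pd_mult _ _ _ _ _ _ H1 H1) | exact (has_pd_mult _ _ _ _ _ _ H2 H2)] | exact N].
    + pose proof (M _ _ N). cbv beta. destruct (f p) as [x y]. destruct a as [a1 a2]. unfold Copp, Cmul, Cinv; simpl in *. unfold Rsqr.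
      field. auto.
  - change (has_pd k (fun q => - snd (f q) / (fst (f q) * fst (f q) + snd (f q) * snd (f q))) p
       (snd (Copp (Cmul a (Cinv (Cmul (f p) (f p))))))).
    eapply has_pd_eq.
    + apply has_pd_div; [exact (has_pd_opp _ _ _ _ H2) | apply has_pd_plus; [exact (has_pd_mult _ _ _ _ _ _ H1 H1) | exact (has_pd_mult _ _ _ _ _ _ H2 H2)] | exact N].
    + pose proof (M _ _ N). cbv beta. destruct (f p) as [x y]. destruct a as [a1 a2]. unfold Copp, Cmul, Cinv; simpl in *. unfold Rsqr.
      field. auto.
Qed.
Definition Zv (a b : R) : Defs.C := Cmul (RtoC (/2)) (Csub (RtoC a) (Cmul Ci (RtoC b))).
Definition Wv (c : R) : Defs.C := Cadd Ci (RtoC c).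
Definition Av (a b c : R) : Defs.C := Cdiv (Copp (Zv a b)) (Wv c).
Definition dAv (a b c a' b' c' : R) : Defs.C :=
  Cdiv (Csub (Cmul (Copp (Zv a' b')) (Wv c)) (Cmul (Copp (Zv a b)) (RtoC c')))
       (Cmul (Wv c) (Wv c)).

Lemma Av_eq a b c : Av a b c = ((b - a*c)/(2*(c*c+1)), (a+b*c)/(2*(c*c+1))).
Proof.
  assert (c*c+1 <> 0) by nra.
  unfold Av, Zv, Wv, Cdiv, Cinv, Cmul, Csub, Cadd, Copp, RtoC, Ci; simpl.
  f_equal; field; auto.
Qed.

Lemma dAv_eq a b c a' b' c' : dAv a b c a' b' c' =
  let n1 := (-a'*c - b' + a*c')/2 in let n2 := (-a' + b'*c - b*c')/2 in
  let Q := c*c+1 in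
  ((n1*(c*c-1) + n2*(2*c))/(Q*Q), (n2*(c*c-1) - n1*(2*c))/(Q*Q)).
Proof.
  assert (c*c+1 <> 0) by nra.
  assert ((c*c-1)*(c*c-1) + (2*c)*(2*c) <> 0) by nra.
  unfold dAv, Zv, Wv, Cdiv, Cinv, Cmul, Csub, Cadd, Copp, RtoC, Ci; simpl.
  f_equal; field; split; auto; nra.
Qed.

Definition Nv (P Pu axi ayi axj ayj h11 h12 h21 h22 ui1 ui2 uj1 uj2 : R) : Defs.C :=
  let fzi := ((axi/2), (-ayi/2)) in
  let fzbj := ((axj/2), (ayj/2)) in
  let fzz := ((h11+h22)/4, (h12 - h21)/4) in
  let fzbju := (uj1/2, uj2/2) in
  let fziu := (ui1/2, -ui2/2) in
  Cadd (Cadd (Cmul fzz (RtoC (P*P+1))) (Copp (Cmul fzi (Cmul fzbju (P, -1)))))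
       (Cadd (Copp (Cmul fzbj (Cmul fziu (P, 1)))) (Cmul fzi (Cmul fzbj (RtoC Pu)))).

Lemma keyL (P Pu axi ayi axj ayj h11 h12 h21 h22 ui1 ui2 uj1 uj2 : R) :
  Cmul (Cadd (Cmul (RtoC (/2)) (Csub (Cconj (dAv axj ayj P h11 h12 ui1))
                                      (Cmul Ci (Cconj (dAv axj ayj P h21 h22 ui2)))))
             (Cmul (Av axi ayi P) (Cconj (dAv axj ayj P uj1 uj2 Pu))))
       (Csub (RtoC P) Ci)
  = Copp (Cmul (Nv P Pu axi ayi axj ayj h11 h12 h21 h22 ui1 ui2 uj1 uj2) (RtoC (/(P*P+1)))).
Proof.
  assert (HP : P * P + 1 <> 0) by nra.
  rewrite !dAv_eq, !Av_eq. 
  unfold Nv, Cmul, Csub, Cadd, Copp, Cconj, RtoC, Ci; simpl.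
  f_equal; field; auto.
Qed.

Lemma keyR (P Pu axi ayi axj ayj h11 h12 h21 h22 ui1 ui2 uj1 uj2 : R) :
  Cmul (Cadd (Cmul (RtoC (/2)) (Cadd (dAv axi ayi P h11 h21 uj1)
                                      (Cmul Ci (dAv axi ayi P h12 h22 uj2))))
             (Cmul (Cconj (Av axj ayj P)) (dAv axi ayi P ui1 ui2 Pu)))
       (Cadd (RtoC P) Ci)
  = Copp (Cmul (Nv P Pu axi ayi axj ayj h11 h12 h21 h22 ui1 ui2 uj1 uj2) (RtoC (/(P*P+1)))).
Proof.
  assert (HP : P * P + 1 <> 0) by nra.
  rewrite !dAv_eq, !Av_eq. 
  unfold Nv, Cmul, Csub, Cadd, Copp, Cconj, RtoC, Ci; simpl.
  f_equal; field; auto.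
Qed.
Lemma Cdiv_cross (x y z w : Defs.C) : y <> C0 -> w <> C0 ->
  Cmul x w = Cmul z y -> Cdiv x y = Cdiv z w.
Proof.
  intros Hy Hw E. pose proof (Cnz _ Hy) as Ny. pose proof (Cnz _ Hw) as Nw.
  destruct x as [x1 x2], y as [y1 y2], z as [z1 z2], w as [w1 w2]; simpl in *.
  unfold Cmul in E; simpl in E. injection E; intros E2 E1.
  assert (X1 : x1 * (w1*w1+w2*w2) = (z1*y1 - z2*y2)*w1 + (z1*y2+z2*y1)*w2).
  { rewrite <- E1, <- E2; ring. }
  assert (X2 : x2 * (w1*w1+w2*w2) = (z1*y2+z2*y1)*w1 - (z1*y1 - z2*y2)*w2).
  { rewrite <- E1, <- E2; ring. }
  assert (x1 = ((z1*y1 - z2*y2)*w1 + (z1*y2+z2*y1)*w2)/(w1*w1+w2*w2)) by (rewrite <- X1; field; auto).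
  assert (x2 = ((z1*y2+z2*y1)*w1 - (z1*y1 - z2*y2)*w2)/(w1*w1+w2*w2)) by (rewrite <- X2; field; auto).
  subst x1 x2.
  unfold Cdiv, Cmul, Cinv; simpl. f_equal; field; auto.
Qed.

Lemma rot (a b : Defs.C) (P : R) :
  Cmul a (Csub (RtoC P) Ci) = Cmul b (Cadd (RtoC P) Ci) ->
  a = Cmul b ((P*P-1)/(P*P+1), 2*P/(P*P+1)).
Proof.
  intros E. assert (HP : P*P+1 <> 0) by nra.
  destruct a as [a1 a2], b as [b1 b2].
  unfold Cmul, Csub, Cadd, Copp, RtoC, Ci in E; simpl in E.
  injection E; intros E2 E1.
  assert (E1' : a1*P + a2 = b1*P - b2) by nra.
  assert (E2' : a2*P - a1 = b2*P + b1) by nra.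
  assert (X1 : a1*(P*P+1) = P*(b1*P - b2) - (b2*P + b1)).
  { transitivity (P*(a1*P+a2) - (a2*P - a1)); [ring | rewrite E1', E2'; ring]. }
  assert (X2 : a2*(P*P+1) = P*(b2*P + b1) + (b1*P - b2)).
  { transitivity (P*(a2*P-a1) + (a1*P + a2)); [ring | rewrite E1', E2'; ring]. }
  unfold Cmul; simpl. f_equal.
  - apply (Rmult_eq_reg_r (P*P+1)); auto. rewrite X1. field; auto.
  - apply (Rmult_eq_reg_r (P*P+1)); auto. rewrite X2. field; auto.
Qed.

Lemma final (a b c d : Defs.C) (P : R) :
  Cmul a (Csub (RtoC P) Ci) = Cmul b (Cadd (RtoC P) Ci) ->
  Cmul c (Csub (RtoC P) Ci) = Cmul d (Cadd (RtoC P) Ci) ->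
  c <> C0 -> d <> C0 -> Csub c d <> C0 ->
  Copp (Cdiv (Csub a b) (Csub c d)) = Copp (Cdiv a c) /\
  Copp (Cdiv a c) = Copp (Cdiv b d).
Proof.
  intros Eab Ecd Hc Hd Hcd.
  pose proof (rot _ _ _ Eab) as Ra. pose proof (rot _ _ _ Ecd) as Rc.
  assert (HP : P*P+1 <> 0) by nra.
  split; f_equal; apply Cdiv_cross; auto; rewrite Ra, Rc;
  destruct b, d; unfold Cmul, Csub, Cadd, Copp; simpl; f_equal; field; auto.
Qed.

Lemma Cpd_toCF (phi : pt -> R) m q : Cpd m (toCF phi) q = RtoC (pd m phi q).
Proof.
  unfold Cpd, RtoC. f_equal. apply pd_eq. exact (has_pd_const m 0 q).
Qed.

Lemma Acoef_eq phi j q : Acoef phi j q = Av (pd (xv j) phi q) (pd (yv j) phi q) (pd U phi q).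
Proof. unfold Acoef, Dz, Av, Zv, Wv. rewrite !Cpd_toCF. reflexivity. Qed.

Lemma Wv_nz c : Wv c <> C0.
Proof. unfold Wv, Cadd, Ci, RtoC, C0; simpl. intro E. injection E. lra. Qed.

Lemma hasC_Av n f1 f2 f3 p a b c : has_pd n f1 p a -> has_pd n f2 p b -> has_pd n f3 p c ->
  hasC n (fun q => Av (f1 q) (f2 q) (f3 q)) p (dAv (f1 p) (f2 p) (f3 p) a b c).
Proof.
  intros H1 H2 H3. unfold Av, Cdiv, Zv, Wv.
  eapply hasC_eq.
  - apply hasC_mul.
    + apply hasC_opp. apply hasC_mul. apply hasC_const.
      apply hasC_sub. apply hasC_RtoC; exact H1.
      apply hasC_mul. apply hasC_const. apply hasC_RtoC; exact H2.
    + apply hasC_inv. apply hasC_add. apply hasC_const. apply hasC_RtoC; exact H3.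
      apply Wv_nz.
  - assert (f3 p * f3 p + 1 <> 0) by nra.
    assert ((f3 p * f3 p - 1)*(f3 p * f3 p - 1) + (2*f3 p)*(2*f3 p) <> 0) by nra.
    unfold dAv, Zv, Wv, Cdiv, Cinv, Cmul, Csub, Cadd, Copp, RtoC, Ci, C0; simpl.
    f_equal; field; split; auto; nra.
Qed.

Lemma hasC_Acoef phi j n p a b c :
  has_pd n (pd (xv j) phi) p a -> has_pd n (pd (yv j) phi) p b -> has_pd n (pd U phi) p c ->
  hasC n (Acoef phi j) p (dAv (pd (xv j) phi p) (pd (yv j) phi p) (pd U phi p) a b c).
Proof.
  intros H1 H2 H3. eapply hasC_ext.
  - intro q. symmetry. apply Acoef_eq.
  - apply hasC_Av; assumption.
Qed.

Lemma LL_rel phi p i j :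
  (forall m n, has_pd n (pd m phi) p (pd n (pd m phi) p)) ->
  (forall m n, pd n (pd m phi) p = pd m (pd n phi) p) ->
  Cmul (Lf phi i (Abar phi j) p) (Csub (RtoC (pd U phi p)) Ci)
  = Cmul (Lbf phi j (Acoef phi i) p) (Cadd (RtoC (pd U phi p)) Ci).
Proof.
  intros HD HS.
  assert (dAj : forall m, hasC m (Abar phi j) p
     (Cconj (dAv (pd (xv j) phi p) (pd (yv j) phi p) (pd U phi p)
        (pd m (pd (xv j) phi) p) (pd m (pd (yv j) phi) p) (pd m (pd U phi) p)))).
  { intro m. exact (hasC_conj _ _ _ _ (hasC_Acoef phi j m p _ _ _ (HD _ _) (HD _ _) (HD _ _))). }
  assert (dAi : forall m, hasC m (Acoef phi i) p
     (dAv (pd (xv i) phi p) (pd (yv i) phi p) (pd U phi p)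
        (pd m (pd (xv i) phi) p) (pd m (pd (yv i) phi) p) (pd m (pd U phi) p))).
  { intro m. exact (hasC_Acoef phi i m p _ _ _ (HD _ _) (HD _ _) (HD _ _)). }
  unfold Lf, Lbf, Dz, Dzb, Du.
  rewrite !(Cpd_eq _ _ _ _ (dAj _)), !(Cpd_eq _ _ _ _ (dAi _)).
  unfold Abar. rewrite !Acoef_eq.
  rewrite keyL.
  rewrite (HS (xv i) (xv j)), (HS (yv i) (xv j)), (HS U (xv j)),
          (HS (xv i) (yv j)), (HS (yv i) (yv j)), (HS U (yv j)).
  rewrite (HS (xv i) U), (HS (yv i) U).
  symmetry. apply keyR.
Qed.
Lemma gA p k l u v : k <> l -> getc (setc (setc p k u) l v) k = u.
Proof. destruct p, k, l; simpl; intros; try reflexivity; congruence. Qed.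
Lemma gB p k l u v : getc (setc (setc p k u) l v) l = v.
Proof. destruct p, k, l; reflexivity. Qed.
Lemma sA p k l u v z : k <> l -> setc (setc (setc p k u) l v) k z = setc (setc p k z) l v.
Proof. destruct p, k, l; simpl; intros; try reflexivity; congruence. Qed.
Lemma sB p k l u v z : setc (setc (setc p k u) l v) l z = setc (setc p k u) l z.
Proof. destruct p, k, l; reflexivity. Qed.
Lemma sC p k l u v : k <> l -> setc (setc p k u) l v = setc (setc p l v) k u.
Proof. destruct p, k, l; simpl; intros; try reflexivity; congruence. Qed.
Lemma close_q p k l u v e : k <> l -> Rabs (u - getc p k) < e -> Rabs (v - getc p l) < e -> 0 < e ->
  close (setc (setc p k u) l v) p e.
Proof.
  intros Hkl Hu Hv He m. destruct p, k, l, m; simpl in *; try congruence; try assumption;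
  unfold Rminus; rewrite Rplus_opp_r, Rabs_R0; assumption.
Qed.

Section Sw.
Variables (D : pt -> Prop) (f : pt -> R) (p : pt) (eps : R).
Hypothesis Heps : 0 < eps.
Hypothesis HD : forall q, close q p eps -> D q.
Hypothesis E1 : forall m q, D q -> exists L, has_pd m f q L.
Hypothesis E2 : forall m n q, D q -> exists L, has_pd n (pd m f) q L.

Lemma Lmain k l u v : k <> l -> Rabs (u - getc p k) < eps -> Rabs (v - getc p l) < eps ->
  @Derive.is_derive Hierarchy.R_AbsRing Hierarchy.R_NormedModule (fun z : R => Derive.Derive (fun t : R => f (setc (setc p k z) l t)) v) u
    (pd k (pd l f) (setc (setc p k u) l v)).
Proof.
  intros Hkl Hu Hv.
  assert (Hr : 0 < eps - Rabs (u - getc p k)) by lra.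
  apply (@Derive.is_derive_ext_loc Hierarchy.R_AbsRing Hierarchy.R_NormedModule (fun z : R => pd l f (setc (setc p k z) l v))).
  - exists (mkposreal _ Hr). intros z Hz.
    change (Rabs (z - u) < eps - Rabs (u - getc p k)) in Hz.
    assert (Hz' : Rabs (z - getc p k) < eps).
    { replace (z - getc p k) with ((z - u) + (u - getc p k)) by ring.
      pose proof (Rabs_triang (z - u) (u - getc p k)). lra. }
    destruct (E1 l (setc (setc p k z) l v)) as [L HL].
    { apply HD. apply close_q; auto. }
    rewrite (pd_eq _ _ _ _ HL). symmetry. apply Derive.is_derive_unique.
    apply Derive.is_derive_Reals. unfold has_pd in HL. rewrite gB in HL.
    assert (E : (fun t => f (setc (setc (setc p k z) l v) l t)) = (fun t => f (setc (setc p k z) l t))).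
    { apply functional_extensionality; intro t. rewrite sB. reflexivity. }
    rewrite E in HL. exact HL.
  - apply Derive.is_derive_Reals.
    destruct (E2 l k (setc (setc p k u) l v)) as [L HL].
    { apply HD. apply close_q; auto. }
    rewrite (pd_eq _ _ _ _ HL). unfold has_pd in HL. rewrite gA in HL; auto.
    assert (E : (fun t => pd l f (setc (setc (setc p k u) l v) k t)) = (fun t => pd l f (setc (setc p k t) l v))).
    { apply functional_extensionality; intro t. rewrite sA; auto. }
    rewrite E in HL. exact HL.
Qed.

Lemma Dval k l u v : k <> l -> Rabs (u - getc p k) < eps -> Rabs (v - getc p l) < eps ->
  Derive.Derive (fun z : R => Derive.Derive (fun t : R => f (setc (setc p k z) l t)) v) u
   = pd k (pd l f) (setc (setc p k u) l v).
Proof. intros. apply Derive.is_derive_unique. apply Lmain; auto. Qed.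

Hypothesis C2 : forall m n, cont_on D (pd n (pd m f)).
Hypothesis Dp : D p.

Lemma R0lt x : Rabs (x - x) < eps.
Proof. unfold Rminus; rewrite Rplus_opp_r, Rabs_R0; exact Heps. Qed.

Lemma Lcont k l : k <> l -> forall e, 0 < e -> exists d, 0 < d /\ forall u v,
  Rabs (u - getc p k) < d -> Rabs (v - getc p l) < d ->
  Rabs (Derive.Derive (fun z : R => Derive.Derive (fun t : R => f (setc (setc p k z) l t)) v) u
    - Derive.Derive (fun z : R => Derive.Derive (fun t : R => f (setc (setc p k z) l t)) (getc p l)) (getc p k)) < e.
Proof.
  intros Hkl e He. destruct (C2 l k p Dp e He) as [d [Hd Hc]].
  exists (Rmin d eps). split. { apply Rmin_pos; auto. }
  intros u v Hu Hv.
  pose proof (Rmin_l d eps). pose proof (Rmin_r d eps).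
  rewrite (Dval k l u v), (Dval k l (getc p k) (getc p l)); auto; try apply R0lt; try lra.
  rewrite !setc_getc. apply Hc.
  - apply HD. apply close_q; auto; lra.
  - apply close_q; auto; lra.
Qed.

Lemma Var_eq_dec (k l : Var) : {k = l} + {k <> l}.
Proof. decide equality. Qed.

Lemma swapEq k l : pd k (pd l f) p = pd l (pd k f) p.
Proof.
  destruct (Var_eq_dec k l) as [<-|Hkl]; [reflexivity|].
  assert (Hlk : l <> k) by congruence.
  assert (EF : forall u, (fun z : R => Derive.Derive (fun t : R => f (setc (setc p k t) l z)) u)
     = (fun z : R => Derive.Derive (fun t : R => f (setc (setc p l z) k t)) u)).
  { intro u. apply functional_extensionality; intro z. f_equal.
    apply functional_extensionality; intro t. rewrite sC; auto. }
  assert (Hs := Derive_2d.Schwarz (fun s t => f (setc (setc p k s) l t)) (getc p k) (getc p l)).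
  cbv beta in Hs. rewrite !EF in Hs.
  rewrite (Dval k l), (Dval l k) in Hs; try apply R0lt; auto.
  - rewrite !setc_getc in Hs. apply Hs.
    + exists (mkposreal eps Heps). intros u v Hu Hv. simpl in Hu, Hv.
      split; [|split; [|split]].
      * destruct (E1 k (setc (setc p k u) l v)) as [L HL]. { apply HD; apply close_q; auto. }
        exists L. apply Derive.is_derive_Reals. unfold has_pd in HL. rewrite gA in HL; auto.
        assert (E : (fun t => f (setc (setc (setc p k u) l v) k t)) = (fun t => f (setc (setc p k t) l v))).
        { apply functional_extensionality; intro t. rewrite sA; auto. }
        rewrite E in HL. exact HL.
      * destruct (E1 l (setc (setc p k u) l v)) as [L HL]. { apply HD; apply close_q; auto. }
        exists L. apply Derive.is_derive_Reals. unfold has_pd in HL. rewrite gB in HL.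
        assert (E : (fun t => f (setc (setc (setc p k u) l v) l t)) = (fun t => f (setc (setc p k u) l t))).
        { apply functional_extensionality; intro t. rewrite sB; auto. }
        rewrite E in HL. exact HL.
      * eexists. apply Lmain; auto.
      * rewrite EF. eexists. apply Lmain; auto.
    + intros e. destruct (Lcont k l Hkl e (cond_pos e)) as [d [Hd H]].
      exists (mkposreal d Hd). intros u v Hu Hv. simpl in Hu, Hv. apply H; auto.
    + intros e. destruct (Lcont l k Hlk e (cond_pos e)) as [d [Hd H]].
      exists (mkposreal d Hd). intros u v Hu Hv. simpl in Hu, Hv. rewrite !EF. apply H; auto.
Qed.
End Sw.

Lemma Ck_down n D f : Ck (S n) D f -> Ck n D f.
Proof.
  revert f. induction n as [|n IH]; intros f [Hc H].
  - split; auto.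
  - split; auto. intro k. destruct (H k) as [H1 H2]. split; auto.
Qed.

Lemma Ck_le n m D f : (m <= n)%nat -> Ck n D f -> Ck m D f.
Proof.
  intros Hle. induction Hle; auto. intro H. apply IHHle. apply Ck_down. exact H.
Qed.

Theorem mainTheorem18 (kappa : nat) (D : pt -> Prop) (phi : pt -> R) :
  (3 <= kappa)%nat ->
  open5 D ->
  Ck kappa D phi ->
  (forall p, D p -> Lf phi I1 (Abar phi I1) p <> C0) ->
  (forall p, D p -> Lbf phi I1 (Acoef phi I1) p <> C0) ->
  (forall p, D p ->
     Csub (Lf phi I1 (Abar phi I1) p) (Lbf phi I1 (Acoef phi I1) p) <> C0) ->
  forall p, D p ->
    Copp (Cdiv (Csub (Lf phi I2 (Abar phi I1) p) (Lbf phi I1 (Acoef phi I2) p))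
               (Csub (Lf phi I1 (Abar phi I1) p) (Lbf phi I1 (Acoef phi I1) p)))
    = Copp (Cdiv (Lf phi I2 (Abar phi I1) p) (Lf phi I1 (Abar phi I1) p))
    /\
    Copp (Cdiv (Lf phi I2 (Abar phi I1) p) (Lf phi I1 (Abar phi I1) p))
    = Copp (Cdiv (Lbf phi I1 (Acoef phi I2) p) (Lbf phi I1 (Acoef phi I1) p)).
Proof.
  intros Hk HO HC Hc Hd Hcd p Dp.
  assert (H3 : Ck 3 D phi) by (exact (Ck_le _ _ _ _ Hk HC)).
  destruct H3 as [_ H3].
  assert (E1 : forall m q, D q -> exists L, has_pd m phi q L) by (intro m; exact (proj1 (H3 m))).
  assert (E2 : forall m n q, D q -> exists L, has_pd n (pd m phi) q L).
  { intros m n. destruct (proj2 (H3 m)) as [_ H]. exact (proj1 (H n)). }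
  assert (C2 : forall m n, cont_on D (pd n (pd m phi))).
  { intros m n. destruct (proj2 (H3 m)) as [_ H]. exact (proj1 (proj2 (H n))). }
  destruct (HO p Dp) as [eps [Heps HD]].
  assert (HS : forall m n, pd n (pd m phi) p = pd m (pd n phi) p).
  { intros m n. exact (swapEq D phi p eps Heps HD E1 E2 C2 Dp n m). }
  assert (HDer : forall m n, has_pd n (pd m phi) p (pd n (pd m phi) p)).
  { intros m n. apply has_pd_spec. exact (E2 m n p Dp). }
  apply (final _ _ _ _ (pd U phi p)).
  - apply LL_rel; auto.
  - apply LL_rel; auto.
  - apply Hc; auto.
  - apply Hd; auto.
  - apply Hcd; auto.
Qed.
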